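(* Let $m\ge 0$ and $N\ge m+1$ be integers. For $k\ge 0$ put $c_k(N)=\sum_{i=0}^{N-1} i^k$ (with $0^0=1$), and let $H_m(N)$ be the $(m+1)\times(m+1)$ Hankel matrix whose $(r,s)$ entry ($1\le r,s\le m+1$) is $c_{r+s-2}(N)$. For $0\le i\le m$ let $M^{(m)}_{(i+1),1}(N)$ be the minor of $H_m(N)$ obtained by deleting row $i+1$ and column $1$ (for $m=0$ this minor is $1$), and set $$a_{im}(N)=(-1)^i\,\frac{M^{(m)}_{(i+1),1}(N)}{\det H_m(N)},\qquad h_m(n,N)=\sum_{i=0}^m a_{im}(N)\,n^i .$$ Then for every integer $n$ with $0\le n\le N-1$, $$h_m(n,N)=\frac{(m+1)^2}{N}\,{}_3F_2\!\left(\begin{matrix}-m,\ n+1,\ m+2\\ 2,\ N+1\end{matrix};1\right)=\frac{(m+1)^2}{N}\,Q_m(-1-n;\,1,\,0,\,-1-N),$$ where $Q_m$ denotes the Hahn polynomial defined below.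
   Context: ${}_3F_2\!\left(\begin{matrix}a_1,a_2,a_3\\ b_1,b_2\end{matrix};1\right)=\sum_{k\ge0}\frac{(a_1)_k(a_2)_k(a_3)_k}{(b_1)_k(b_2)_k\,k!}$, with $(a)_k=a(a+1)\cdots(a+k-1)$ the Pochhammer symbol; when $a_1=-m$ the sum terminates at $k=m$. The Hahn polynomial is defined by $Q_m(y;\alpha,\beta,M)={}_3F_2\!\left(\begin{matrix}-m,\ m+\alpha+\beta+1,\ -y\\ \alpha+1,\ -M\end{matrix};1\right)$, the sum taken from $k=0$ to $m$. The functions $h_m(n,N)$ are the discrete Shmaliy polynomials. *)

(* Defs.v *)
From HB Require Import structures.
From mathcomp Require Import all_boot all_order all_algebra.
Unset Printing Implicit Defensive.
Import Order.TTheory GRing.Theory Num.Theory.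
Local Open Scope ring_scope.

(* power sums c_k(N) = sum_{i=0}^{N-1} i^k, with 0^0 = 1 (expr0) *)
Definition csum (R : realFieldType) (k N : nat) : R :=
  \sum_(i < N) (i%:R) ^+ k.

(* Hankel matrix H_m(N), 0-indexed: entry (r,s) = c_{r+s}(N) *)
Definition hankel (R : realFieldType) (m N : nat) : 'M[R]_(m.+1) :=
  \matrix_(r < m.+1, s < m.+1) csum R (r + s) N.

(* minor M^{(m)}_{(i+1),1}(N): delete row i (0-indexed) and column 0 *)
Definition hminor (R : realFieldType) (m N : nat) (i : 'I_m.+1) : R :=
  \det (row' i (col' ord0 (hankel R m N))).

Definition acoef (R : realFieldType) (m N : nat) (i : 'I_m.+1) : R :=
  (-1) ^+ i * hminor R m N i / \det (hankel R m N).

Definition shmaliy (R : realFieldType) (m : nat) (n : R) (N : nat) : R :=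
  \sum_(i < m.+1) acoef R m N i * n ^+ i.

Definition poch (R : realFieldType) (a : R) (k : nat) : R :=
  \prod_(j < k) (a + j%:R).

Definition F32 (R : realFieldType) (a1 a2 a3 b1 b2 : R) (K : nat) : R :=
  \sum_(k < K.+1) (poch R a1 k * poch R a2 k * poch R a3 k)
                   / (poch R b1 k * poch R b2 k * (k`!)%:R).

Definition hahnQ (R : realFieldType) (m : nat) (y alpha beta M : R) : R :=
  F32 R (- m%:R) (m%:R + alpha + beta + 1) (- y) (alpha + 1) (- M) m.

(* Main.v *)
Require Import Defs.
Set Warnings "-notation-overridden,-ambiguous-paths".
From HB Require Import structures.
From mathcomp Require Import all_boot all_order all_algebra.
From mathcomp Require Import ring lra zify.
Import Order.TTheory GRing.Theory Num.Theory.
Local Open Scope ring_scope.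

Lemma vand N r k :
  (\sum_(j < N) 'C(N - j.+1, r) * 'C(j + k, k) = 'C(N + k, r + k.+1))%N.
Proof.
elim: N r => [|N IH] r.
  by rewrite big_ord0 bin_small // add0n addnS ltnS leq_addl.
rewrite big_ord_recr /= subnn.
case: r => [|r].
  have := IH 0%N; rewrite add0n => IH0.
  have E : forall M, (\sum_(j < M) 'C(M - j.+1, 0) * 'C(j + k, k) = \sum_(j < M) 'C(j + k, k))%N.
    by move=> M; apply: eq_bigr => j _; rewrite bin0 mul1n.
  rewrite (eq_bigr (fun i : 'I_N => 'C(i+k,k))); last by move=> i _; rewrite bin0 mul1n.
  by rewrite -(E N) IH0 bin0 mul1n addSn binS.
rewrite bin0n /= mul0n addn0.
transitivity (\sum_(i < N) ('C(N - i.+1, r.+1) * 'C(i + k, k) + 'C(N - i.+1, r) * 'C(i + k, k)))%N.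
  apply: eq_bigr => i _.
  by rewrite subSS -subnSK // binS mulnDl.
by rewrite big_split /= !IH addSn !addSn binS.
Qed.

Definition Tsum (R : realFieldType) (M a d : nat) : R :=
  \sum_(l < M.+1) (-1) ^+ l * 'C(M, l)%:R * 'C(a + l, d)%:R.

Lemma Tsum_step (R : realFieldType) M a d :
  Tsum R M.+1 a d = Tsum R M a d - Tsum R M a.+1 d.
Proof.
rewrite /Tsum big_ord_recl /= expr0 bin0 mul1r addn0.
have -> : \sum_(i < M.+1) (-1) ^+ bump 0 i * 'C(M.+1, bump 0 i)%:R * 'C(a + bump 0 i, d)%:R
  = \sum_(i < M.+1) (-1) ^+ i.+1 * 'C(M, i.+1)%:R * 'C(a + i.+1, d)%:R
    - \sum_(i < M.+1) (-1) ^+ i * 'C(M, i)%:R * 'C(a.+1 + i, d)%:R :> R.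
  rewrite -sumrB; apply: eq_bigr => i _.
  rewrite /bump /= !add1n binS natrD exprS addnS addSn.
  ring.
rewrite big_ord_recr /= (bin_small (ltnSn M)) mulr0 mul0r addr0.
rewrite [in RHS]big_ord_recl /= expr0 bin0 mul1r addn0.
rewrite addrA; congr (_ + _ - _).
Qed.

Lemma Tsum_S (R : realFieldType) M a d :
  Tsum R M a.+1 d.+1 = Tsum R M a d.+1 + Tsum R M a d.
Proof.
rewrite /Tsum -big_split /=; apply: eq_bigr => i _.
rewrite addSn binS natrD; ring.
Qed.

Lemma Tsum_0 (R : realFieldType) M a b : Tsum R M a 0 = Tsum R M b 0.
Proof. by apply: eq_bigr => i _; rewrite !bin0. Qed.

Lemma Tsum_zero (R : realFieldType) M a d : (d < M)%N -> Tsum R M a d = 0.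
Proof.
elim: M a d => [|M IH] a d //.
rewrite Tsum_step; case: d => [|d] Hd.
  by rewrite (Tsum_0 _ _ a.+1 a) subrr.
by rewrite Tsum_S (IH a d) // addr0 subrr.
Qed.

Lemma altbin (R : realFieldType) m r : (r <= m)%N ->
  \sum_(k < m.+1) (-1) ^+ k * 'C(m.+1, k.+1)%:R * 'C(m.+1 + k, m - r)%:R
    = 'C(m, m - r)%:R :> R.
Proof.
move=> Hr.
have := Tsum_zero R m.+1 m (m - r).
rewrite /Tsum big_ord_recl /= expr0 bin0 mul1r addn0 => H.
have E : \sum_(i < m.+1) (-1) ^+ bump 0 i * 'C(m.+1, bump 0 i)%:R * 'C(m + bump 0 i, m - r)%:R
  = - \sum_(k < m.+1) (-1) ^+ k * 'C(m.+1, k.+1)%:R * 'C(m.+1 + k, m - r)%:R :> R.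
  rewrite -sumrN; apply: eq_bigr => i _.
  rewrite /bump /= add1n exprS addnS -addSn; ring.
  move: H; rewrite E mul1r => H; apply/eqP; rewrite eq_sym -subr_eq0 H //.
  by rewrite ltnS leq_subr.
Qed.

Definition Fc (R : realFieldType) (n : nat) : R := (n`!)%:R.

Lemma Fc_neq0 (R : realFieldType) n : Fc R n != 0.
Proof. by rewrite /Fc pnatr_eq0 -lt0n fact_gt0. Qed.

Lemma FcS (R : realFieldType) n : Fc R n.+1 = n.+1%:R * Fc R n.
Proof. by rewrite /Fc factS natrM. Qed.

Lemma ffactF (R : realFieldType) a k : ((a + k) ^_ k)%:R = Fc R (a + k) / Fc R a.
Proof.
apply: (mulIf (Fc_neq0 R a)); rewrite divfK ?Fc_neq0 //.
rewrite /Fc -natrM; congr (_%:R).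
by rewrite -(ffact_fact (leq_addl a k)) addnK.
Qed.

Lemma ffactF' (R : realFieldType) m k : (k <= m)%N -> (m ^_ k)%:R = Fc R m / Fc R (m - k).
Proof.
move=> H; have := ffactF R (m - k) k; by rewrite subnK.
Qed.

Lemma binF (R : realFieldType) a b : (b <= a)%N ->
  'C(a, b)%:R = Fc R a / (Fc R b * Fc R (a - b)).
Proof.
move=> H; apply: (mulIf (mulf_neq0 (Fc_neq0 R b) (Fc_neq0 R (a - b)))).
rewrite divfK ?mulf_neq0 ?Fc_neq0 //.
by rewrite /Fc -!natrM bin_fact.
Qed.

Lemma poch_nat (R : realFieldType) a k : poch R (a%:R + 1) k = ((a + k) ^_ k)%:R.
Proof.
elim: k => [|k IH]; first by rewrite /poch big_ord0 ffactn0.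
rewrite /poch big_ord_recr /= -/(poch R _ k) IH addnS ffactSS natrM mulrC.
by rewrite -natr1 natrD; congr (_ * _); ring.
Qed.

Lemma poch_neg (R : realFieldType) m k : poch R (- m%:R) k = (-1) ^+ k * (m ^_ k)%:R.
Proof.
elim: k => [|k IH]; first by rewrite /poch big_ord0 ffactn0 expr0 mulr1.
rewrite /poch big_ord_recr /= -/(poch R _ k) IH ffactnSr natrM exprS.
case: (leqP k m) => H.
  rewrite natrB //; ring.
by rewrite ffact_small // !(mulr0, mul0r).
Qed.

Definition gfun (R : realFieldType) m N (x : R) : R :=
  m.+1%:R ^+ 2 / N%:R * F32 R (- m%:R) (x + 1) (m%:R + 2) 2 (N%:R + 1) m.

Lemma Key (R : realFieldType) m N r : (m < N)%N -> (r <= m)%N ->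
  \sum_(j < N) 'C(N - j.+1, r)%:R * gfun R m N j%:R = 'C(N.-1, r)%:R.
Proof.
move=> HN Hr.
pose c : R := m.+1%:R ^+ 2 / N%:R.
pose B k : R := (-1)^+k * (Fc R m / Fc R (m - k)) * (Fc R (m.+1 + k) / Fc R m.+1)
   / (Fc R (1 + k) / Fc R 1 * (Fc R (N + k) / Fc R N)).
transitivity (c * \sum_(k < m.+1) B k * 'C(N + k, r + k.+1)%:R).
  rewrite /gfun /F32.
  transitivity (c * \sum_(k < m.+1) \sum_(j < N) B k * ('C(N - j.+1, r) * 'C(j + k, k))%:R).
    rewrite -/c exchange_big mulr_sumr; apply: eq_bigr => j _.
    rewrite mulrCA; congr (c * _); rewrite mulr_sumr; apply: eq_bigr => k _.
    have Hk : (k <= m)%N by rewrite -ltnS.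
    have E2 : m%:R + 2 = m.+1%:R + 1 :> R by rewrite -[m.+1]addn1 natrD -addrA.
    have E3 : 2 = 1%:R + 1 :> R by [].
    rewrite E2 E3 !poch_nat poch_neg (ffactF' R m k Hk) !ffactF natrM.
    rewrite (binF R _ _ (leq_addl j k)) addnK /B /Fc.
    rewrite -!/(Fc R _).
    by field; rewrite !pnatr_eq0 -!lt0n !fact_gt0.
  congr (c * _); apply: eq_bigr => k _.
  by rewrite -mulr_sumr -natr_sum vand.
pose K : R := Fc R m * Fc R N * Fc R (m - r) / (Fc R m.+1 ^+ 2 * Fc R (N - r.+1)).
transitivity (c * \sum_(k < m.+1) ((-1) ^+ k * 'C(m.+1, k.+1)%:R * 'C(m.+1 + k, m - r)%:R) * K).
  congr (c * _); apply: eq_bigr => k _.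
  have Hk : (k <= m)%N by rewrite -ltnS.
  rewrite (binF R (N + k) (r + k.+1)); last by lia.
  rewrite (binF R m.+1 k.+1) // (binF R (m.+1 + k) (m - r)); last by lia.
  have -> : (N + k - (r + k.+1) = N - r.+1)%N by lia.
  have -> : (m.+1 + k - (m - r) = r + k.+1)%N by lia.
  have F1 : Fc R 1 = 1 by [].
  rewrite subSS /B /K add1n F1.
  by field; rewrite !Fc_neq0.
rewrite -big_distrl /= altbin // (binF R m (m - r)) ?leq_subr // subKn //.
rewrite (binF R N.-1 r); last by lia.
have -> : (N.-1 - r = N - r.+1)%N by lia.
have FN : Fc R N = N%:R * Fc R N.-1 by case: (N) HN => // N0 _; rewrite FcS.
have N0 : N%:R != 0 :> R by rewrite pnatr_eq0; lia.
rewrite /c /K (FcS R m) FN.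
by field; rewrite N0 addrC natr1 !pnatr_eq0 -!lt0n !fact_gt0.
Qed.

Definition Pk (R : realFieldType) (k : nat) : {poly R} :=
  \prod_(i < k) ('X - (- (1 + i%:R))%:P).

Lemma Pk_eval (R : realFieldType) k (x : R) : (Pk R k).[x] = poch R (x + 1) k.
Proof.
rewrite /Pk horner_prod /poch; apply: eq_bigr => i _.
by rewrite hornerXsubC opprK addrA.
Qed.

Lemma Pk_size (R : realFieldType) k : size (Pk R k) = k.+1.
Proof. by rewrite /Pk size_prod_XsubC [index_enum _]unlock -enumT size_enum_ord. Qed.

Definition Acoef (R : realFieldType) m N k : R :=
  poch R (- m%:R) k * poch R (m%:R + 2) k / (poch R 2 k * poch R (N%:R + 1) k * (k`!)%:R).

Definition Gp (R : realFieldType) m N : {poly R} :=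
  (m.+1%:R ^+ 2 / N%:R) *: \sum_(k < m.+1) Acoef R m N k *: Pk R k.

Lemma Gp_eval (R : realFieldType) m N x : (Gp R m N).[x] = gfun R m N x.
Proof.
rewrite /Gp /gfun hornerZ horner_sum /F32; congr (_ * _); apply: eq_bigr => k _.
rewrite hornerZ Pk_eval /Acoef; ring.
Qed.

Lemma Gp_size (R : realFieldType) m N : (size (Gp R m N) <= m.+1)%N.
Proof.
rewrite /Gp (leq_trans (size_scale_leq _ _)) //.
apply: (big_ind (fun p : {poly R} => size p <= m.+1)%N).
- by rewrite size_poly0.
- by move=> p q Hp Hq; rewrite (leq_trans (size_polyD _ _)) // geq_max Hp Hq.
- by move=> k _; rewrite (leq_trans (size_scale_leq _ _)) // Pk_size.
Qed.

Lemma prodL (R : realFieldType) u d : \prod_(i < d) (u%:R - i%:R : R) = (u ^_ d)%:R.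
Proof.
elim: d => [|d IH]; first by rewrite big_ord0 ffactn0.
rewrite big_ord_recr /= IH ffactnSr natrM.
case: (leqP d u) => H; first by rewrite natrB.
by rewrite ffact_small // !(mul0r, mulr0).
Qed.

Definition Qd (R : realFieldType) N d : {poly R} :=
  \prod_(i < d) ('X - ((N.-1 - i)%:R)%:P).

Lemma Qd_monic (R : realFieldType) N d : Qd R N d \is monic.
Proof. exact: monic_prod_XsubC. Qed.

Lemma Qd_size (R : realFieldType) N d : size (Qd R N d) = d.+1.
Proof. by rewrite /Qd size_prod_XsubC [index_enum _]unlock -enumT size_enum_ord. Qed.

Lemma Qd_eval (R : realFieldType) N d j : (d <= N.-1)%N -> (j <= N.-1)%N ->
  (Qd R N d).[j%:R] = (-1) ^+ d * ('C(N.-1 - j, d) * d`!)%:R.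
Proof.
move=> Hd Hj; rewrite /Qd horner_prod bin_ffact -prodL.
have -> : (-1) ^+ d = \prod_(i < d) (-1 : R) by rewrite prodr_const card_ord.
rewrite -big_split /=.
apply: eq_bigr => i _; have Hi := ltn_ord i.
rewrite hornerXsubC !natrB; [ring|lia|lia].
Qed.

Definition Phi (R : realFieldType) m N (p : {poly R}) : R :=
  \sum_(j < N) p.[j%:R] * (Gp R m N).[j%:R] - p.[0].

Lemma Phi_lin (R : realFieldType) m N (p q : {poly R}) (a : R) :
  Phi R m N (p - a *: q) = Phi R m N p - a * Phi R m N q.
Proof.
rewrite /Phi mulrBr mulr_sumr.
have -> : \sum_(j < N) (p - a *: q).[j%:R] * (Gp R m N).[j%:R]
  = \sum_(j < N) p.[j%:R] * (Gp R m N).[j%:R] - \sum_(j < N) a * (q.[j%:R] * (Gp R m N).[j%:R]).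
  by rewrite -sumrB; apply: eq_bigr => j _; rewrite hornerD hornerN hornerZ; ring.
rewrite hornerD hornerN hornerZ; ring.
Qed.

Lemma Phi_Qd (R : realFieldType) m N d : (m < N)%N -> (d <= m)%N -> Phi R m N (Qd R N d) = 0.
Proof.
move=> HN Hd.
rewrite /Phi.
have -> : (Qd R N d).[0] = (-1) ^+ d * d`!%:R * 'C(N.-1, d)%:R.
  by rewrite -[0]/(0%:R) Qd_eval ?subn0 ?natrM //; [ring | lia].
have -> : \sum_(j < N) (Qd R N d).[j%:R] * (Gp R m N).[j%:R]
   = (-1) ^+ d * d`!%:R * \sum_(j < N) 'C(N - j.+1, d)%:R * gfun R m N j%:R.
  rewrite mulr_sumr; apply: eq_bigr => j _.
  have Hj := ltn_ord j; rewrite Qd_eval; [|lia|lia].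
  rewrite Gp_eval natrM (_ : (N.-1 - j = N - j.+1)%N); last by lia.
  ring.
by rewrite Key // subrr.
Qed.

Lemma size_drop (R : realFieldType) (q : {poly R}) d :
  (size q <= d.+1)%N -> q`_d = 0 -> (size q <= d)%N.
Proof.
move=> H1 H2; rewrite leqNgt; apply/negP => H3.
have E : size q = d.+1 by apply/eqP; rewrite eqn_leq H1 H3.
have : lead_coef q = 0 by rewrite lead_coefE E.
by move/eqP; rewrite lead_coef_eq0 => /eqP q0; rewrite q0 size_poly0 in E.
Qed.

Lemma Phi_span (R : realFieldType) m N d (p : {poly R}) : (m < N)%N -> (d <= m.+1)%N ->
  (size p <= d)%N -> Phi R m N p = 0.
Proof.
move=> HN; elim: d p => [|d IH] p Hd Hs.
  move: Hs; rewrite leqn0 size_poly_eq0 => /eqP ->.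
  by rewrite /Phi horner0 big1 ?subrr // => j _; rewrite horner0 mul0r.
have E : Phi R m N p = Phi R m N (p - p`_d *: Qd R N d) + p`_d * Phi R m N (Qd R N d).
  by rewrite Phi_lin subrK.
rewrite E Phi_Qd // mulr0 addr0 IH //; first by lia.
apply: size_drop.
  rewrite (leq_trans (size_polyD _ _)) // geq_max Hs size_polyN.
  by rewrite (leq_trans (size_scale_leq _ _)) // Qd_size.
have Hl : (Qd R N d)`_d = 1.
  by have := Qd_monic R N d; rewrite monicE lead_coefE Qd_size => /eqP.
by rewrite coefB coefZ Hl mulr1 subrr.
Qed.

Lemma Phi_Xn (R : realFieldType) m N r : (m < N)%N -> (r <= m)%N ->
  \sum_(j < N) (j%:R ^+ r) * (Gp R m N).[j%:R] = (r == 0)%:R.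
Proof.
move=> HN Hr.
have := @Phi_span R m N r.+1 'X^r HN.
rewrite size_polyXn ltnS Hr => /(_ isT (leqnn _)).
rewrite /Phi hornerXn expr0n => /eqP; rewrite subr_eq0 => /eqP <-.
by apply: eq_bigr => j _; rewrite hornerXn.
Qed.

Lemma hank_mul (R : realFieldType) m N (p : {poly R}) r : (size p <= m.+1)%N ->
  \sum_(s < m.+1) p`_s * csum R (s + r) N = \sum_(j < N) j%:R ^+ r * p.[j%:R].
Proof.
move=> Hs; rewrite /csum.
under eq_bigr => s _ do rewrite mulr_sumr.
rewrite exchange_big /=; apply: eq_bigr => j _.
rewrite (horner_coef_wide _ Hs) mulr_sumr; apply: eq_bigr => s _.
rewrite exprD; ring.
Qed.

Lemma det_neq0 (R : realFieldType) m N : (m < N)%N -> \det (hankel R m N) != 0.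
Proof.
move=> HN; apply/negP => /det0P [v vn0 vH].
pose P : {poly R} := \poly_(s < m.+1) v 0 (inord s).
have HP : (size P <= m.+1)%N by apply: size_poly.
have P0 : forall r, (r <= m)%N -> \sum_(j < N) j%:R ^+ r * P.[j%:R] = 0.
  move=> r Hr; rewrite -(hank_mul R m N P r HP).
  have Hr' : (r < m.+1)%N by [].
  have := congr1 (fun M : 'M[R]_(1, m.+1) => M 0 (Ordinal Hr')) vH.
  rewrite !mxE => E; apply: (etrans _ E); apply: eq_bigr => s _.
  by rewrite coef_poly ltn_ord inord_val !mxE.
have S0 : \sum_(j < N) P.[j%:R] ^+ 2 = 0.
  transitivity (\sum_(s < m.+1) P`_s * \sum_(j < N) j%:R ^+ s * P.[j%:R]).
    under eq_bigr => j _ do rewrite {1}(horner_coef_wide _ HP) expr2 mulr_suml.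
    rewrite exchange_big /=; apply: eq_bigr => s _; rewrite mulr_sumr.
    by apply: eq_bigr => j _; rewrite -(horner_coef_wide _ HP) mulrA.
  by rewrite big1 // => s _; rewrite P0 ?mulr0 // -ltnS.
have Pj : forall j : 'I_N, P.[j%:R] = 0.
  move=> j; apply/eqP; rewrite -sqrf_eq0; apply/eqP.
  by apply: (psumr_eq0P _ S0) => // i _; rewrite sqr_ge0.
have Pz : P = 0.
  apply/eqP; apply/negP => /negP Pn0.
  have := max_poly_roots Pn0 (rs := [seq i%:R | i <- iota 0 N]).
  rewrite size_map size_iota.
  have -> : all (root P) [seq i%:R | i <- iota 0 N].
    apply/allP => x /mapP [i]; rewrite mem_iota add0n => /andP [_ Hi] ->.
    by apply/rootP; apply: (Pj (Ordinal Hi)).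
  rewrite map_inj_uniq ?iota_uniq; last by move=> a b /eqP; rewrite eqr_nat => /eqP.
  move=> /(_ isT isT) H; have := leq_trans H HP; by rewrite ltnS leqNgt HN.
apply/negP: vn0; rewrite negbK; apply/eqP/rowP => s.
have := congr1 (fun q : {poly R} => q`_s) Pz.
by rewrite /= coef_poly ltn_ord coef0 inord_val !mxE.
Qed.

Lemma shmaliy_eq (R : realFieldType) m N (x : R) : (m < N)%N ->
  shmaliy R m x N = gfun R m N x.
Proof.
move=> HN.
set H := hankel R m N.
have Hu : H \in unitmx by rewrite unitmxE unitfE det_neq0.
pose b : 'rV[R]_(m.+1) := \row_(s < m.+1) (Gp R m N)`_s.
have bH : b *m H = delta_mx 0 ord0.
  apply/rowP => r; rewrite !mxE.
  transitivity (\sum_(s < m.+1) (Gp R m N)`_s * csum R (s + r) N).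
    by apply: eq_bigr => s _; rewrite /H /hankel !mxE.
  have Hr : (r <= m)%N by rewrite -ltnS.
  rewrite (hank_mul R m N (Gp R m N) r (Gp_size R m N)) (Phi_Xn R m N r HN Hr) eqxx /=.
  by [].
have bE : b = row 0 (invmx H) by rewrite rowE -bH mulmxK.
rewrite -Gp_eval (horner_coef_wide _ (Gp_size R m N)) /shmaliy.
apply: eq_bigr => i _; congr (_ * _).
have := congr1 (fun M : 'rV[R]_(m.+1) => M 0 i) bE; rewrite !mxE => ->.
rewrite /acoef /invmx Hu mxE /adjugate mxE /cofactor /hminor addn0 -/H mulrC.
by [].
Qed.

Theorem mainTheorem1 (R : realFieldType) (m N n : nat) :
  (m.+1 <= N)%N -> (n <= N.-1)%N ->
  shmaliy R m n%:R N
    = (m.+1%:R) ^+ 2 / N%:R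
        * F32 R (- m%:R) (n%:R + 1) (m%:R + 2) 2 (N%:R + 1) m
  /\
  (m.+1%:R) ^+ 2 / N%:R * F32 R (- m%:R) (n%:R + 1) (m%:R + 2) 2 (N%:R + 1) m
    = (m.+1%:R) ^+ 2 / N%:R * hahnQ R m (-1 - n%:R) 1 0 (-1 - N%:R).
Proof.
move=> HN Hn; split; first by rewrite shmaliy_eq.
congr (_ * _); rewrite /hahnQ /F32; apply: eq_bigr => k _.
have e1 : m%:R + 1 + 0 + 1 = m%:R + 2 :> R by ring.
have e2 : - (-1 - n%:R) = n%:R + 1 :> R by ring.
have e3 : 1 + 1 = 2 :> R by ring.
have e4 : - (-1 - N%:R) = N%:R + 1 :> R by ring.
rewrite e1 e2 e3 e4; congr (_ / _); ring.
Qed.
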